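(* Let $m\ge 1$ and $n,k$ be positive integers. For $v=1,\dots,m$ let $X^{(v)}$ be a real $n\times p_v$ centered data matrix ($n$ samples, $p_v$ variables), let $X=[X^{(1)},\dots,X^{(m)}]$ be the $n\times p$ multiview data matrix with $p=p_1+\cdots+p_m$, and let $K^{(v)}=X^{(v)}{X^{(v)}}^T$. Let $X=UDV^T$ be a singular value decomposition of $X$ ($U$ an $n\times n$ orthogonal matrix, $V$ a $p\times p$ orthogonal matrix, $D$ an $n\times p$ rectangular diagonal matrix) with singular values ordered $\sigma_1\ge\sigma_2\ge\cdots$, so that the columns of $U$ are eigenvectors of $XX^T$ and the columns of $V$ are eigenvectors of $X^TX$ ordered by non-increasing eigenvalue. Let $U_k$ be the $n\times k$ matrix of the first $k$ columns of $U$, let $Q$ be an arbitrary $k\times k$ orthogonal matrix, and put $H=U_kQ$. Write $V^T=[{V^{(1)}}^T,\dots,{V^{(m)}}^T]$ where ${V^{(v)}}^T$ is the $p\times p_v$ block of columns of $V^T$ corresponding to the variables of view $v$, and let ${V_{1:k}^{(v)}}^T$ be the $k\times p_v$ matrix consisting of the top $k$ rows of ${V^{(v)}}^T$. Then for every $v=1,\dots,m$, $$\mathrm{tr}\big(H^TK^{(v)}H\big)=\mathrm{tr}\big({V_{1:k}^{(v)}}^T{X^{(v)}}^TX^{(v)}V_{1:k}^{(v)}\big)+\sum_{w\neq v}\mathrm{tr}\big({V_{1:k}^{(v)}}^T{X^{(v)}}^TX^{(w)}V_{1:k}^{(w)}\big).$$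
   Context: All matrices are real; $\mathrm{tr}$ denotes the trace. *)

(* Defs.v *)
From mathcomp Require Import all_boot all_order all_algebra.
Set Implicit Arguments. Unset Strict Implicit. Unset Printing Implicit Defensive.
Import Order.TTheory GRing.Theory Num.Theory.
Local Open Scope ring_scope.

Section Defs.
Variable R : realFieldType.

Definition centered n q (A : 'M[R]_(n, q)) : Prop :=
  forall j : 'I_q, \sum_(i < n) A i j = 0.

Definition orthogonal_mx n (A : 'M[R]_n) : Prop := A^T *m A = 1%:M.

Definition svd_diag n p (D : 'M[R]_(n, p)) : Prop :=
  [/\ forall (i : 'I_n) (j : 'I_p), (i : nat) != j -> D i j = 0,
      forall (i : 'I_n) (j : 'I_p), (i : nat) = j -> 0 <= D i j &
      forall (i1 i2 : 'I_n) (j1 j2 : 'I_p),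
        (i1 : nat) = j1 -> (i2 : nat) = j2 -> (i1 <= i2)%N -> D i2 j2 <= D i1 j1].

Definition firstcols n q k (hk : (k <= q)%N) (A : 'M[R]_(n, q)) : 'M[R]_(n, k) :=
  \matrix_(i < n, j < k) A i (widen_ord hk j).

Definition toprows q r k (hk : (k <= q)%N) (A : 'M[R]_(q, r)) : 'M[R]_(k, r) :=
  \matrix_(i < k, j < r) A (widen_ord hk i) j.

End Defs.

(* Main.v *)
Require Import Defs.
From mathcomp Require Import all_boot all_order all_algebra.
Import Order.TTheory GRing.Theory Num.Theory.
Local Open Scope ring_scope.

Section Aux.
Variable R : realFieldType.

Lemma toprows_mul q r s k (hk : (k <= q)%N) (A : 'M[R]_(q, r)) (B : 'M[R]_(r, s)) :
  toprows hk (A *m B) = toprows hk A *m B.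
Proof. by apply/matrixP=> i j; rewrite !mxE; apply: eq_bigr => l _; rewrite !mxE. Qed.

Lemma firstcols_mul q r s k (hk : (k <= s)%N) (A : 'M[R]_(q, r)) (B : 'M[R]_(r, s)) :
  firstcols hk (A *m B) = A *m firstcols hk B.
Proof. by apply/matrixP=> i j; rewrite !mxE; apply: eq_bigr => l _; rewrite !mxE. Qed.

Definition Sblk n p k (hkn : (k <= n)%N) (hkp : (k <= p)%N) (D : 'M[R]_(n, p)) : 'M[R]_k :=
  \matrix_(i, j) D (widen_ord hkn i) (widen_ord hkp j).
Arguments Sblk {n p k}.


Lemma diag1 n p k (hkn : (k <= n)%N) (hkp : (k <= p)%N) (D : 'M[R]_(n, p)) s
  (M : 'M[R]_(p, s)) :
  (forall (i : 'I_n) (j : 'I_p), (i : nat) != j -> D i j = 0) ->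
  toprows hkn D *m M = Sblk hkn hkp D *m toprows hkp M.
Proof.
move=> hD; apply/matrixP=> i c; rewrite !mxE.
rewrite (bigD1 (widen_ord hkp i)) // (bigD1 i) //= !mxE.
rewrite [in LHS]big1 ?[in RHS]big1 ?addr0 // => j hj; rewrite !mxE hD ?mul0r //=;
  by apply: contra hj => /eqP h; apply/eqP/val_inj.
Qed.

Lemma diag2 n p k (hkn : (k <= n)%N) (hkp : (k <= p)%N) (D : 'M[R]_(n, p)) s
  (N : 'M[R]_(s, n)) :
  (forall (i : 'I_n) (j : 'I_p), (i : nat) != j -> D i j = 0) ->
  N *m firstcols hkp D = firstcols hkn N *m Sblk hkn hkp D.
Proof.
move=> hD; apply/matrixP=> a j; rewrite !mxE.
rewrite (bigD1 (widen_ord hkn j)) // (bigD1 j) //= !mxE.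
rewrite [in LHS]big1 ?[in RHS]big1 ?addr0 // => i hi; rewrite !mxE hD ?mulr0 //=;
  by apply: contra hi => /eqP h; apply/eqP/val_inj.
Qed.

End Aux.
Arguments Sblk {R n p k}.

Theorem proposition1 (R : realFieldType) (m n k : nat) (p_ : 'I_m -> nat)
    (X_ : forall v : 'I_m, 'M[R]_(n, p_ v))
    (U : 'M[R]_n) (D : 'M[R]_(n, \sum_(v < m) p_ v)) (V : 'M[R]_(\sum_(v < m) p_ v))
    (Q : 'M[R]_k)
    (hkn : (k <= n)%N) (hkp : (k <= \sum_(v < m) p_ v)%N) :
  (0 < m)%N -> (0 < n)%N -> (0 < k)%N -> (forall v, 0 < p_ v)%N ->
  (forall v, centered (X_ v)) ->
  orthogonal_mx U -> orthogonal_mx V -> svd_diag D ->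
  mxrow X_ = U *m D *m V^T ->
  orthogonal_mx Q ->
  let H := firstcols hkn U *m Q in
  let K := fun v => X_ v *m (X_ v)^T in
  let Vk := fun v => toprows hkp (submxrow V^T v) in
  forall v : 'I_m,
    \tr (H^T *m K v *m H) =
      \tr (Vk v *m (X_ v)^T *m X_ v *m (Vk v)^T)
      + \sum_(w < m | w != v) \tr (Vk v *m (X_ v)^T *m X_ w *m (Vk w)^T).
Proof.
move=> _ _ _ _ _ hU hV [hD _ _] hX hQ H K Vk v.
set E := firstcols hkn U.
set S := Sblk hkn hkp D.
set W := toprows hkp V^T.
have hVk : forall w, Vk w = submxrow W w.
  by move=> w; apply/matrixP=> i j; rewrite !mxE.
have hET : E^T = toprows hkn U^T by apply/matrixP=> i j; rewrite !mxE.
have L1 : E^T *m mxrow X_ = S *m W.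
  rewrite hET -toprows_mul hX !mulmxA hU mul1mx toprows_mul.
  exact: diag1.
have hWT : W^T = firstcols hkp V by apply/matrixP=> i j; rewrite !mxE.
have L2 : mxrow X_ *m W^T = E *m S.
  rewrite hWT -firstcols_mul hX -!mulmxA hV mulmx1 firstcols_mul.
  exact: diag2.
have L3 : E^T *m X_ v = S *m Vk v.
  by rewrite hVk mul_submxrow -{1}(mxrowK X_ v) mul_submxrow L1.
have hW : W = mxrow Vk by apply/mxrowP => w; rewrite mxrowK; exact/esym/hVk.
have L4 : \sum_w X_ w *m (Vk w)^T = E *m S.
  by rewrite -L2 -mul_mxrow_mxcol -tr_mxrow -hW.
have hQ' : Q *m Q^T = 1%:M by apply: mulmx1C.
have -> : \tr (Vk v *m (X_ v)^T *m X_ v *m (Vk v)^T)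
      + \sum_(w < m | w != v) \tr (Vk v *m (X_ v)^T *m X_ w *m (Vk w)^T)
    = \tr (Vk v *m (X_ v)^T *m (\sum_w X_ w *m (Vk w)^T)).
  rewrite mulmx_sumr raddf_sum [RHS](bigD1 v) //=; congr (_ + _).
    by rewrite !mulmxA.
  by apply: eq_bigr => w _; rewrite !mulmxA.
rewrite L4.
have hXE : (X_ v)^T *m E = (S *m Vk v)^T by rewrite -L3 trmx_mul trmxK.
rewrite -(mulmxA (Vk v)) (mulmxA _ E) hXE.
rewrite /H /K trmx_mul -/E !mulmxA mxtrace_mulC !mulmxA hQ' mul1mx.
have -> : E^T *m X_ v *m (X_ v)^T *m E = (S *m Vk v) *m (S *m Vk v)^T.
  by rewrite -L3 trmx_mul trmxK !mulmxA.
by rewrite [RHS]mxtrace_mulC -mulmxA mxtrace_mulC.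
Qed.
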